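(* Let $G$ be a finite group whose non-centralizer graph $\Upsilon_G$ is regular. Then for each $x\in G$, the centralizer $C_G(x)$ is a normal subgroup of $G$ and $G/C_G(x)$ is isomorphic to a subgroup of $Z(G)$.
   Context: For a finite group $G$, $C_G(x)$ denotes the centralizer of $x\in G$ and $Z(G)$ the center. The non-centralizer graph $\Upsilon_G$ is the simple graph with vertex set $G$ in which two distinct vertices $x,y$ are adjacent if and only if $C_G(x)\neq C_G(y)$. A graph is regular if all its vertices have the same degree. *)

(* Defs.v *)
From mathcomp Require Import all_boot all_fingroup all_solvable.
Set Implicit Arguments. Unset Strict Implicit. Unset Printing Implicit Defensive.
Local Open Scope group_scope.

Definition nc_adj (gT : finGroupType) (G : {group gT}) (x y : gT) : bool :=
  (x != y) && ('C_G[x] != 'C_G[y]).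

Definition nc_degree (gT : finGroupType) (G : {group gT}) (x : gT) : nat :=
  #|[set y in G | nc_adj G x y]|.

Definition nc_regular (gT : finGroupType) (G : {group gT}) : Prop :=
  forall x y, x \in G -> y \in G -> nc_degree G x = nc_degree G y.

(* Main.v *)
Require Import Defs.
From mathcomp Require Import all_boot all_fingroup all_solvable.
Local Open Scope group_scope.
Set Implicit Arguments. Unset Strict Implicit.

Section S.
Variables (gT : finGroupType) (G : {group gT}).

Definition T (x : gT) := [set u in G | 'C_G[u] == 'C_G[x]].

Lemma degE x : x \in G -> nc_degree G x = #|G| - #|T x|.
Proof.
move=> Gx; rewrite /nc_degree.
have -> : [set y in G | nc_adj G x y] = G :\: T x.
  apply/setP=> y; rewrite !inE /nc_adj; case: (y \in G) => //=.
  rewrite andbT; case: (x =P y) => [->|_]; first by rewrite eqxx.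
  by rewrite eq_sym.
rewrite cardsD; congr (_ - _); apply/eq_card => y; rewrite !inE.
by case: (y \in G).
Qed.

Lemma T1 : T 1 = 'Z(G).
Proof.
apply/setP=> u; rewrite !inE cent11T setIT.
case Gu: (u \in G) => //=.
rewrite eqEsubset subsetIl /= subsetI subxx sub_cent1 /=.
by [].
Qed.

Lemma centM x z : z \in 'Z(G) -> 'C_G[x * z] = 'C_G[x].
Proof.
move=> /centerP [Gz cz]; apply/setP=> g; rewrite !in_setI.
case Gg: (g \in G) => //=.
rewrite !cent1E.
have czg := cz g Gg.
rewrite mulgA -[x * z * g]mulgA czg mulgA.
by rewrite (inj_eq (mulIg z)).
Qed.

Lemma centV x : 'C_G[x^-1] = 'C_G[x].
Proof.
apply/setP=> g; rewrite !in_setI; congr (_ && _).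
apply/cent1P/cent1P => h; last exact: commuteV.
by rewrite -[x]invgK; apply: commuteV.
Qed.

Lemma commZ a b : a \in G -> b \in G -> a * a \in 'Z(G) -> b * b \in 'Z(G) ->
  (a * b) * (a * b) \in 'Z(G) -> [~ a, b] \in 'Z(G).
Proof.
move=> Ga Gb Za Zb.
have [w ew] : {w | w = (a * b) * (a * b)} by exists ((a * b) * (a * b)).
rewrite -ew => Zw.
have -> : [~ a, b] = (a^-1 * b^-1) * w * (b^-1 * a^-1).
  by rewrite ew commgEl conjgE !mulgA !mulgK.
have cw : commute w (a^-1 * b^-1).
  by move/centerP: Zw => [_ ]; apply; rewrite groupM ?groupV.
rewrite -cw -mulgA; apply: groupM => //.
rewrite mulgA -[a^-1 * b^-1 * b^-1]mulgA -invMg.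
have Gbb : (b * b)^-1 \in 'Z(G) by rewrite groupV.
have cb : commute ((b * b)^-1) a^-1.
  by move/centerP: Gbb => [_ ]; apply; rewrite groupV.
rewrite -cb -mulgA -invMg; apply: groupM; rewrite ?groupV //.
Qed.
End S.

Theorem theorem2p10 (gT : finGroupType) (G : {group gT}) :
  nc_regular G ->
  forall x, x \in G ->
    'C_G[x] <| G /\
    exists H : {group gT}, H \subset 'Z(G) /\ (G / 'C_G[x]) \isog H.
Proof.
move=> Hreg x Gx.
have sZG : 'Z(G) \subset G by apply: center_sub.
have sq : forall y, y \in G -> y * y \in 'Z(G).
  move=> y Gy.
  have sTG : forall u, T G u \subset G by move=> u; apply/subsetP=> v; rewrite inE => /andP[].
  have cT : #|T G y| = #|'Z(G)|.
    have e := Hreg y 1 Gy (group1 G).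
    rewrite (degE Gy) (degE (group1 G)) (T1 G) in e.
    have h1 := subset_leq_card (sTG y).
    have h2 := subset_leq_card sZG.
    by rewrite -(subKn h1) e subKn.
  have sub : y *: 'Z(G) \subset T G y.
    apply/subsetP=> u; rewrite mem_lcoset => Zu.
    have -> : u = y * (y^-1 * u) by rewrite mulKVg.
    rewrite inE centM // eqxx andbT groupM //.
    exact: (subsetP sZG).
  have eT : y *: 'Z(G) = T G y.
    by apply/eqP; rewrite eqEcard sub cT card_lcoset leqnn.
  have : y^-1 \in T G y by rewrite inE groupV Gy centV eqxx.
  rewrite -eT mem_lcoset => h.
  by rewrite -[y * y]invgK invMg groupV.
have cZ : forall g, g \in G -> [~ x, g] \in 'Z(G).
  by move=> g Gg; apply: commZ; rewrite ?sq ?groupM.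
have cen : forall c v, c \in 'Z(G) -> v \in G -> commute c v.
  by move=> c v /centerP [_ h]; apply: h.
have fM : {in G &, {morph (fun g => [~ x, g]) : u v / u * v}}.
  move=> u v Gu Gv /=.
  rewrite commgMJ conjgE (cen _ _ (cZ u Gu) Gv) mulKg.
  exact: cen (cZ v Gv) (subsetP sZG _ (cZ u Gu)).
pose f := Morphism fM.
have kf : 'ker f = 'C_G[x].
  apply/setP=> u; rewrite !in_setI.
  case Gu: (u \in G) => //=.
  rewrite cent1E !inE.
  apply/commgP/eqP => /= h; exact: esym.
rewrite -kf; split; first exact: ker_normal.
exists (f @* G)%G; split; last exact: first_isog.
apply/subsetP=> y /morphimP [u Gu _ ->]; exact: cZ.
Qed.
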